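(* Consider, on $\{(\theta_1,\dots,\theta_4,I_1,\dots,I_4)\in\mathbb{T}^4\times(0,\infty)^4\}$, the Hamiltonian \[ \mathcal{G}:=2\sqrt{I_1I_2I_3I_4}\,\cos(\theta_1-\theta_2+\theta_3-\theta_4), \] with $(\theta_i,I_i)$, $i=1,\dots,4$, canonically conjugate pairs. Let $\mathtt{c}>0$. Then for every sufficiently small $\varepsilon>0$ with $\mathtt{c}>\tfrac83\varepsilon$ there exists an orbit $g_{\varepsilon,\mathtt{c}}(t)=(\theta_1(t),\dots,\theta_4(t),I_1(t),\dots,I_4(t))$ of $\mathcal{G}$ and a time $T_0>0$ such that \[ I_1(0)=I_2(0)=I_3(0)=\frac{\mathtt{c}-\varepsilon}{3},\qquad I_4(0)=\varepsilon, \] \[ I_1(T_0)=I_3(T_0)=\frac{\mathtt{c}}{6}+\frac{2\varepsilon}{3},\qquad I_2(T_0)=\frac{\mathtt{c}}{2}-\frac{4\varepsilon}{3},\qquad I_4(T_0)=\frac{\mathtt{c}}{6}, \] and $T_0\le\dfrac{6}{\mathtt{c}}$.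
   Context: The orbit is a solution of Hamilton's equations $\dot\theta_i=\partial_{I_i}\mathcal{G}$, $\dot I_i=-\partial_{\theta_i}\mathcal{G}$, $i=1,\dots,4$. ''Sufficiently small $\varepsilon$'' means $\varepsilon$ below a threshold that may depend on $\mathtt{c}$. *)

(* Defs.v *)
From Stdlib Require Import Reals Lra.
From Coquelicot Require Import Coquelicot.
Open Scope R_scope.

(* The Hamiltonian G(θ1..θ4, I1..I4) = 2 sqrt(I1 I2 I3 I4) cos(θ1-θ2+θ3-θ4).
   Angles are represented by real lifts (G is 2π-periodic in each θi). *)
Definition G (th1 th2 th3 th4 I1 I2 I3 I4 : R) : R :=
  2 * sqrt (I1 * I2 * I3 * I4) * cos (th1 - th2 + th3 - th4).

Definition hamilton_at (th1 th2 th3 th4 I1 I2 I3 I4 : R -> R) (t : R) : Prop :=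
  let a1 := th1 t in let a2 := th2 t in let a3 := th3 t in let a4 := th4 t in
  let j1 := I1 t in let j2 := I2 t in let j3 := I3 t in let j4 := I4 t in
  is_derive th1 t (Derive (fun x => G a1 a2 a3 a4 x j2 j3 j4) j1) /\
  is_derive th2 t (Derive (fun x => G a1 a2 a3 a4 j1 x j3 j4) j2) /\
  is_derive th3 t (Derive (fun x => G a1 a2 a3 a4 j1 j2 x j4) j3) /\
  is_derive th4 t (Derive (fun x => G a1 a2 a3 a4 j1 j2 j3 x) j4) /\
  is_derive I1 t (- Derive (fun x => G x a2 a3 a4 j1 j2 j3 j4) a1) /\
  is_derive I2 t (- Derive (fun x => G a1 x a3 a4 j1 j2 j3 j4) a2) /\
  is_derive I3 t (- Derive (fun x => G a1 a2 x a4 j1 j2 j3 j4) a3) /\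
  is_derive I4 t (- Derive (fun x => G a1 a2 a3 x j1 j2 j3 j4) a4).

Definition orbit_on (T : R) (th1 th2 th3 th4 I1 I2 I3 I4 : R -> R) : Prop :=
  forall t, 0 <= t <= T ->
    0 < I1 t /\ 0 < I2 t /\ 0 < I3 t /\ 0 < I4 t /\
    hamilton_at th1 th2 th3 th4 I1 I2 I3 I4 t.

(* Main.v *)
Require Import Defs.
From Stdlib Require Import Reals Lra.
From Coquelicot Require Import Coquelicot.
Open Scope R_scope.

Lemma dG1 a2 a3 a4 j1 j2 j3 j4 a1 :
  Derive (fun x => G x a2 a3 a4 j1 j2 j3 j4) a1 = - (2 * sqrt (j1*j2*j3*j4)) * sin (a1 - a2 + a3 - a4).
Proof. apply is_derive_unique. unfold G. auto_derive; auto. unfold Rminus; ring. Qed.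
Lemma dG2 a1 a3 a4 j1 j2 j3 j4 a2 :
  Derive (fun x => G a1 x a3 a4 j1 j2 j3 j4) a2 = (2 * sqrt (j1*j2*j3*j4)) * sin (a1 - a2 + a3 - a4).
Proof. apply is_derive_unique. unfold G. auto_derive; auto. unfold Rminus; ring. Qed.
Lemma dG3 a1 a2 a4 j1 j2 j3 j4 a3 :
  Derive (fun x => G a1 a2 x a4 j1 j2 j3 j4) a3 = - (2 * sqrt (j1*j2*j3*j4)) * sin (a1 - a2 + a3 - a4).
Proof. apply is_derive_unique. unfold G. auto_derive; auto. unfold Rminus; ring. Qed.
Lemma dG4 a1 a2 a3 j1 j2 j3 j4 a4 :
  Derive (fun x => G a1 a2 a3 x j1 j2 j3 j4) a4 = (2 * sqrt (j1*j2*j3*j4)) * sin (a1 - a2 + a3 - a4).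
Proof. apply is_derive_unique. unfold G. auto_derive; auto. unfold Rminus; ring. Qed.

Lemma cos_phi : cos (- (PI/2) - 0 + 0 - 0) = 0.
Proof. replace (- (PI/2) - 0 + 0 - 0) with (- (PI/2)) by ring. rewrite cos_neg. apply cos_PI2. Qed.
Lemma sin_phi : sin (- (PI/2) - 0 + 0 - 0) = -1.
Proof. replace (- (PI/2) - 0 + 0 - 0) with (- (PI/2)) by ring. rewrite sin_neg, sin_PI2. ring. Qed.

Lemma dGI_zero (f : R -> R) y : Derive (fun x => 2 * sqrt (f x) * cos (- (PI/2) - 0 + 0 - 0)) y = 0.
Proof. rewrite cos_phi. apply is_derive_unique.
  apply (is_derive_ext (fun _ => 0)). intros t; symmetry; apply Rmult_0_r. apply (is_derive_const 0). Qed.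

Definition zz (z0 b t : R) := z0 * exp (2*b*t).
Definition rr (z0 b t : R) := (zz z0 b t + 1)/(zz z0 b t - 1).

Lemma d_rr z0 b t : zz z0 b t <> 1 -> is_derive (rr z0 b) t (- b * (rr z0 b t ^ 2 - 1)).
Proof. intros H. unfold rr, zz in *.
  assert (H': z0 * exp (2*b*t) - 1 <> 0) by (intro; apply H; lra).
  evar (d:R). assert (is_derive (fun t => (z0 * exp (2*b*t) + 1)/(z0 * exp (2*b*t) - 1)) t d).
  { auto_derive. auto. unfold d. reflexivity. }
  unfold d in H0. eapply is_derive_ext; [|refine (eq_ind _ _ H0 _ _)]. intros; reflexivity.
  field. auto.
Qed.

Lemma d_comp (F : R -> R) dF (r : R -> R) t dr : is_derive F (r t) dF -> is_derive r t dr -> is_derive (fun t => F (r t)) t (dr * dF).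
Proof. intros H1 H2. apply (is_derive_comp F r t dF dr); auto. Qed.

Definition F1 a k y := 2*a*(y^2-1)/(k^2*y^2-1).
Definition F2 a e k y := k^2*y^2*(a-e)/(k^2*y^2-1).
Definition F4 a e k y := (a-e)/(k^2*y^2-1).
Definition SS a e k y := F1 a k y * (k*y*(a-e)/(k^2*y^2-1)).

Lemma core a e k m b (r : R -> R) t :
  a = k^2*m/2 -> e = m - k^2*m/2 -> b = k*m -> k^2 * r t ^2 - 1 <> 0 ->
  is_derive r t (- b * (r t ^ 2 - 1)) ->
  is_derive (fun t => F1 a k (r t)) t (- 2 * SS a e k (r t)) /\
  is_derive (fun t => F2 a e k (r t)) t (2 * SS a e k (r t)) /\
  is_derive (fun t => F4 a e k (r t)) t (2 * SS a e k (r t)).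
Proof.
  intros Ha He Hb HD Hr. subst a e b. unfold SS, F1.
  split; [|split].
  - evar (d0:R). assert (HH0: is_derive (fun y => 2 * (k ^ 2 * m / 2) * (y ^ 2 - 1) / (k ^ 2 * y ^ 2 - 1)) (r t) d0).
    { auto_derive. auto. unfold d0; reflexivity. }
    pose proof (d_comp _ _ r t _ HH0 Hr) as G0. unfold d0 in G0.
    eapply is_derive_ext; [|refine (eq_ind _ _ G0 _ _)]. intros; reflexivity. field; rewrite Rpow_mult_distr; auto.
  - evar (d1:R). assert (HH1: is_derive (fun y => k^2*y^2*((k ^ 2 * m / 2)-(m - k ^ 2 * m / 2))/(k^2*y^2-1)) (r t) d1).
    { auto_derive. auto. unfold d1; reflexivity. }
    pose proof (d_comp _ _ r t _ HH1 Hr) as G1. unfold d1 in G1. unfold F2.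
    eapply is_derive_ext; [|refine (eq_ind _ _ G1 _ _)]. intros; reflexivity. field; rewrite Rpow_mult_distr; auto.
  - evar (d2:R). assert (HH2: is_derive (fun y => ((k ^ 2 * m / 2)-(m - k ^ 2 * m / 2))/(k^2*y^2-1)) (r t) d2).
    { auto_derive. auto. unfold d2; reflexivity. }
    pose proof (d_comp _ _ r t _ HH2 Hr) as G2. unfold d2 in G2. unfold F4.
    eapply is_derive_ext; [|refine (eq_ind _ _ G2 _ _)]. intros; reflexivity. field; rewrite Rpow_mult_distr; auto.
Qed.

Lemma sqrtP a e k y : 1 < y -> 0 < k -> 0 < k^2*y^2 - 1 -> e < a -> 0 < a ->
  sqrt (F1 a k y * F2 a e k y * F1 a k y * F4 a e k y) = SS a e k y.
Proof.
  intros. assert (0 <= SS a e k y).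
  { unfold SS, F1. apply Rmult_le_pos; apply Rlt_le; apply Rdiv_lt_0_compat; try nra;
    repeat apply Rmult_lt_0_compat; nra. }
  rewrite <- (sqrt_Rsqr (SS a e k y)) by auto. f_equal. unfold Rsqr, SS, F1, F2, F4. field. lra.
Qed.

Lemma exp_le' x y : x <= y -> exp x <= exp y.
Proof. intros [H|H]. left; apply exp_increasing; auto. subst; lra. Qed.

Lemma Derive_zero (F : R -> R) y : (forall x, F x = 0) -> Derive F y = 0.
Proof. intros H. apply is_derive_unique. apply (is_derive_ext (fun _ => 0)).
  intros t; symmetry; apply H. apply (is_derive_const 0). Qed.

Lemma ln2_lt1 : ln 2 < 1.
Proof. rewrite <- (ln_exp 1). apply ln_increasing. lra.
  pose proof (exp_ineq1 1). lra. Qed.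

Theorem lemma4p1 :
  forall c : R, 0 < c ->
  exists eps0 : R, 0 < eps0 /\
  forall eps : R, 0 < eps -> eps < eps0 -> c > 8 / 3 * eps ->
  exists (th1 th2 th3 th4 I1 I2 I3 I4 : R -> R) (T0 : R),
    0 < T0 /\
    orbit_on T0 th1 th2 th3 th4 I1 I2 I3 I4 /\
    I1 0 = (c - eps) / 3 /\ I2 0 = (c - eps) / 3 /\ I3 0 = (c - eps) / 3 /\
    I4 0 = eps /\
    I1 T0 = c / 6 + 2 * eps / 3 /\ I3 T0 = c / 6 + 2 * eps / 3 /\
    I2 T0 = c / 2 - 4 * eps / 3 /\ I4 T0 = c / 6 /\
    T0 <= 6 / c.
Proof.
  intros c Hc. exists (c/100). split; [lra|]. intros e He He0 _.
  set (a := (c-e)/3). set (m := a+e). set (K2 := 2*a/m).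
  assert (Ha : 0 < a) by (unfold a; lra).
  assert (Hm : 0 < m) by (unfold m; lra).
  assert (HK2 : 0 < K2) by (unfold K2; apply Rdiv_lt_0_compat; lra).
  set (k := sqrt K2).
  assert (Hk : 0 < k) by (apply sqrt_lt_R0; auto).
  assert (Hk2 : k^2 = K2) by (apply pow2_sqrt; lra).
  set (b := k*m).
  assert (Hb : 0 < b) by (unfold b; nra).
  set (vT2 := 3 - 8*e/c).
  assert (HvT2a : 2.92 <= vT2 <= 3).
  { unfold vT2. assert (0 < 8*e/c <= 0.08). split. apply Rdiv_lt_0_compat; lra.
    apply (Rmult_le_reg_r c); auto. unfold Rdiv; rewrite Rmult_assoc, Rinv_l; lra. lra. }
  assert (HiK2 : / K2 >= 1/2).
  { unfold K2. rewrite Rinv_div.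
    replace (m/(2*a)) with (1/2 + e/(2*a)) by (unfold m; field; lra).
    assert (0 <= e/(2*a)) by (apply Rlt_le, Rdiv_lt_0_compat; lra). lra. }
  set (rT := sqrt (vT2/K2)).
  assert (HrT2 : rT^2 = vT2/K2) by (apply pow2_sqrt; unfold Rdiv; nra).
  assert (HrT : 17/15 <= rT).
  { assert (0 <= rT) by apply sqrt_pos. assert (vT2/K2 >= 1.46) by (unfold Rdiv; nra). nra. }
  assert (Hae : 33 < a/e).
  { apply (Rmult_lt_reg_r e); auto. unfold Rdiv; rewrite Rmult_assoc, Rinv_l; unfold a; lra. }
  set (r0 := sqrt ((a/e)/K2)).
  assert (Hr02 : r0^2 = (a/e)/K2) by (apply pow2_sqrt; unfold Rdiv in *; nra).
  assert (Hr0 : rT < r0).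
  { apply sqrt_lt_1. unfold Rdiv; nra. unfold Rdiv in *; nra. unfold Rdiv in *.
    apply Rmult_lt_compat_r. apply Rinv_0_lt_compat; auto. lra. }
  set (zT := (rT+1)/(rT-1)). set (z0 := (r0+1)/(r0-1)).
  assert (Hz0 : 1 < z0).
  { unfold z0. apply (Rmult_lt_reg_r (r0-1)). lra. unfold Rdiv; rewrite Rmult_assoc, Rinv_l; lra. }
  assert (HzT : zT <= 16).
  { unfold zT. apply (Rmult_le_reg_r (rT-1)). lra. unfold Rdiv; rewrite Rmult_assoc, Rinv_l; lra. }
  assert (Hzz : z0 < zT).
  { unfold zT, z0. apply (Rmult_lt_reg_r ((rT-1)*(r0-1))). nra.
    replace ((r0 + 1) / (r0 - 1) * ((rT - 1) * (r0 - 1))) with ((r0+1)*(rT-1)) by (field; lra).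
    replace ((rT + 1) / (rT - 1) * ((rT - 1) * (r0 - 1))) with ((rT+1)*(r0-1)) by (field; lra).
    nra. }
  set (T0 := ln (zT/z0) / (2*b)).
  assert (HzTz0 : 1 < zT/z0).
  { apply (Rmult_lt_reg_r z0). lra. unfold Rdiv; rewrite Rmult_assoc, Rinv_l; lra. }
  assert (HT0 : 0 < T0).
  { unfold T0. apply Rdiv_lt_0_compat; [|lra]. rewrite <- ln_1. apply ln_increasing; lra. }
  assert (HzT0 : zz z0 b T0 = zT).
  { unfold zz, T0. replace (2 * b * (ln (zT / z0) / (2 * b))) with (ln (zT/z0)) by (field; lra).
    rewrite exp_ln by lra. field. lra. }
  assert (Hz00 : zz z0 b 0 = z0).
  { unfold zz. rewrite Rmult_0_r, exp_0. ring. }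
  assert (HrrT : rr z0 b T0 = rT).
  { unfold rr. rewrite HzT0. unfold zT. field. split; lra. }
  assert (Hrr0 : rr z0 b 0 = r0).
  { unfold rr. rewrite Hz00. unfold z0. field. split; lra. }
  assert (Hzt : forall t, 0 <= t <= T0 -> z0 <= zz z0 b t <= zT).
  { intros t [Ht1 Ht2]. rewrite <- HzT0. unfold zz. split.
    - rewrite <- (Rmult_1_r z0) at 1. apply Rmult_le_compat_l. lra. rewrite <- exp_0. apply exp_le'. nra.
    - apply Rmult_le_compat_l. lra. apply exp_le'. nra. }
  assert (Hrt : forall t, 0 <= t <= T0 -> rT <= rr z0 b t).
  { intros t Ht. specialize (Hzt t Ht). unfold rr. unfold zT in *.
    set (z := zz z0 b t) in *.
    assert (rT = (((rT+1)/(rT-1)) + 1)/(((rT+1)/(rT-1)) - 1)) by (field; split; lra).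
    rewrite H at 1. set (w := (rT+1)/(rT-1)) in *.
    apply (Rmult_le_reg_r ((w-1)*(z-1))). nra.
    replace ((w + 1) / (w - 1) * ((w - 1) * (z - 1))) with ((w+1)*(z-1)) by (field; lra).
    replace ((z + 1) / (z - 1) * ((w - 1) * (z - 1))) with ((z+1)*(w-1)) by (field; lra).
    nra. }
  assert (HD : forall t, 0 <= t <= T0 -> 1 < rr z0 b t /\ 0 < k^2 * rr z0 b t ^2 - 1).
  { intros t Ht. specialize (Hrt t Ht). split. lra.
    assert (k^2 * rT^2 = vT2). { rewrite Hk2, HrT2. field. lra. }
    assert (rT^2 <= rr z0 b t ^2) by nra. nra. }
  assert (Hae' : e < a) by (unfold a; lra).
  assert (Hame : a = k^2*m/2) by (rewrite Hk2; unfold K2; field; lra).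
  assert (Heme : e = m - k^2*m/2) by (rewrite <- Hame; unfold m; ring).
  exists (fun _ => - (PI/2)), (fun _ => 0), (fun _ => 0), (fun _ => 0),
    (fun t => F1 a k (rr z0 b t)), (fun t => F2 a e k (rr z0 b t)),
    (fun t => F1 a k (rr z0 b t)), (fun t => F4 a e k (rr z0 b t)), T0.
  split; [auto|]. split.
  { intros t Ht. destruct (HD t Ht) as [Hr1 HDt].
    set (y := rr z0 b t) in *. assert (Hyd : y = rr z0 b t) by reflexivity. clearbody y.
    assert (P1 : 0 < F1 a k y) by (unfold F1; apply Rdiv_lt_0_compat; [repeat apply Rmult_lt_0_compat|]; nra).
    assert (P2 : 0 < F2 a e k y) by (unfold F2; apply Rdiv_lt_0_compat; [repeat apply Rmult_lt_0_compat|]; nra).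
    assert (P4 : 0 < F4 a e k y) by (unfold F4; apply Rdiv_lt_0_compat; lra).
    do 4 (split; [auto|]).
    subst y. assert (Hzt1 : zz z0 b t <> 1) by (specialize (Hzt t Ht); lra).
    destruct (core a e k m b (rr z0 b) t Hame Heme eq_refl (Rgt_not_eq _ _ HDt) (d_rr z0 b t Hzt1))
      as [D1 [D2 D4]].
    assert (Hs : sqrt (F1 a k (rr z0 b t) * F2 a e k (rr z0 b t) * F1 a k (rr z0 b t) * F4 a e k (rr z0 b t)) = SS a e k (rr z0 b t))
      by (apply sqrtP; auto).
    unfold hamilton_at. cbv beta zeta.
    rewrite dG1, dG2, dG3, dG4, sin_phi, Hs.
    repeat rewrite Derive_zero by (intros; unfold G; rewrite cos_phi; ring).
    split; [apply (is_derive_const (-(PI/2)))|].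
    split; [apply (is_derive_const 0)|].
    split; [apply (is_derive_const 0)|].
    split; [apply (is_derive_const 0)|].
    split; [refine (eq_ind _ _ D1 _ _); ring|].
    split; [refine (eq_ind _ _ D2 _ _); ring|].
    split; [refine (eq_ind _ _ D1 _ _); ring|].
    refine (eq_ind _ _ D4 _ _); ring. }
  assert (Hk2r0 : k^2 * r0^2 = a/e) by (rewrite Hk2, Hr02; field; lra).
  assert (Hk2rT : k^2 * rT^2 = vT2) by (rewrite Hk2, HrT2; field; lra).
  rewrite Hrr0, HrrT. unfold F1, F2, F4.
  assert (HrT1 : rT^2 = vT2 / k^2) by (rewrite Hk2; auto).
  assert (Hr01 : r0^2 = (a/e) / k^2) by (rewrite Hk2; auto).
  rewrite Hk2rT, Hk2r0, HrT1, Hr01.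
  assert (HK : k^2 = 2*a/m) by auto.
  assert (Hb2 : b >= c/3).
  { assert (b^2 = 2*a*m) by (unfold b; rewrite Rpow_mult_distr, HK; field; lra).
    assert (b^2 >= (c/3)^2).
    { rewrite H. unfold m, a. assert (0 <= c*e) by nra. assert (4*e*e <= c*c) by nra.
      assert (2 * ((c - e) / 3) * ((c - e) / 3 + e) - (c/3)^2 = (c*c + 2*(c*e) - 4*e*e)/9) as Heq by field.
      apply Rminus_ge. rewrite Heq. apply Rle_ge. unfold Rdiv. apply Rmult_le_pos; lra. }
    destruct (Rle_lt_dec (c/3) b) as [Hq|Hq]; [lra|]. assert (b*b < c/3*(c/3)) by (apply Rmult_le_0_lt_compat; lra). replace (b^2) with (b*b) in H0 by ring. replace ((c/3)^2) with (c/3*(c/3)) in H0 by ring. lra. }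
  assert (HT06 : T0 <= 6/c).
  { unfold T0. assert (ln (zT/z0) <= 4).
    { apply Rle_trans with (ln 16). apply ln_le. lra.
      apply Rle_trans with zT; [|lra]. apply (Rmult_le_reg_r z0). lra.
      unfold Rdiv; rewrite Rmult_assoc, Rinv_l; nra.
      replace 16 with (2^4) by ring. rewrite ln_pow by lra. pose proof ln2_lt1. simpl INR. lra. }
    apply Rle_trans with (4/(2*b)). unfold Rdiv. apply Rmult_le_compat_r. left; apply Rinv_0_lt_compat; lra. auto.
    apply (Rmult_le_reg_r (2*b*c)). nra.
    replace (4 / (2 * b) * (2 * b * c)) with (4*c) by (field; lra).
    replace (6 / c * (2 * b * c)) with (12*b) by (field; lra). lra. }
  rewrite HK. unfold vT2, m, a.
  repeat split; try (field; repeat split; lra); auto.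
Qed.
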